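(* Let $N\ge2$ be even, let $\phi$ lie in the closed interval with endpoints $0$ and $\phi^*_N$, let $\theta=\theta(\phi)$, and let $\phi'=N\phi/2$, $\theta'=\theta-\frac{N-2}2\phi$. Then $(\phi',\theta')\in\mathcal F$.
   Context: $\mathcal G=(\pi/4,\pi/2)\cup(\pi/2,3\pi/4)\cup(5\pi/4,3\pi/2)\cup(3\pi/2,7\pi/4)$, $\mathcal F=\big[(-\pi/4,\pi/4)\times\mathcal G\big]\cup\big[((-\pi/4,\pi/4)\setminus\{0\})\times\{\pi/2,3\pi/2\}\big]$. $\theta^*_N=2\pi t_N/(N+1)$ with $t_N=N/4+1/2,\ N/4,\ 3N/4+1/2,\ 3N/4+1$ for $N\equiv2,4,6,0\pmod8$; $\theta(\phi)=\frac{N-1}{N+1}\phi+\theta^*_N$; $\phi^*_N=\mathrm{sgn}[\sin(2\theta^*_N)]\frac{\pi}{4N}$. *)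

(* Defs.v *)
From Stdlib Require Import Reals Lra Lia.
Open Scope R_scope.

Definition in_G (t : R) : Prop :=
  (PI/4 < t < PI/2) \/ (PI/2 < t < 3*PI/4) \/
  (5*PI/4 < t < 3*PI/2) \/ (3*PI/2 < t < 7*PI/4).

Definition in_F (p t : R) : Prop :=
  (-(PI/4) < p < PI/4 /\ in_G t) \/
  (-(PI/4) < p < PI/4 /\ p <> 0 /\ (t = PI/2 \/ t = 3*PI/2)).

Definition t_N (N : nat) : R :=
  match (N mod 8)%nat with
  | 2%nat => INR N / 4 + 1/2
  | 4%nat => INR N / 4
  | 6%nat => 3 * INR N / 4 + 1/2
  | _ => 3 * INR N / 4 + 1        (* N = 0 mod 8 *)
  end.

Definition theta_star (N : nat) : R := 2 * PI * t_N N / (INR N + 1).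

Definition theta_of (N : nat) (phi : R) : R :=
  (INR N - 1) / (INR N + 1) * phi + theta_star N.

Definition sgn (x : R) : R :=
  match Rlt_dec 0 x with
  | left _ => 1
  | right _ => match Rlt_dec x 0 with left _ => -1 | right _ => 0 end
  end.

Definition phi_star (N : nat) : R :=
  sgn (sin (2 * theta_star N)) * (PI / (4 * INR N)).

(* Main.v *)
Require Import Defs.
From Stdlib Require Import Reals.
From Stdlib Require Import Lra Lia.
Open Scope R_scope.

Lemma frac_bounds (num D : R) : 0 < D -> -(D*(PI/4)) < num < D*(PI/4) ->
  (0 < num -> 0 < num / D < PI/4) /\ (num < 0 -> -(PI/4) < num / D < 0).
Proof.
  intros HD [H1 H2].
  assert (E : num = (num / D) * D) by (field; lra).
  set (q := num / D) in *.
  split; intros; split; nra.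
Qed.

Lemma sgn_pos x : 0 < x -> sgn x = 1.
Proof. intros; unfold sgn; destruct (Rlt_dec 0 x); lra. Qed.
Lemma sgn_neg x : x < 0 -> sgn x = -1.
Proof. intros; unfold sgn; destruct (Rlt_dec 0 x); [lra|]; destruct (Rlt_dec x 0); lra. Qed.

Lemma sin_small n : 0 < n -> 0 < sin (PI / (n+1)).
Proof.
  intros Hn. apply sin_gt_0.
  - apply Rdiv_lt_0_compat; [apply PI_RGT_0|lra].
  - assert (E : PI / (n+1) * (n+1) = PI) by (field; lra).
    pose proof PI_RGT_0. nra.
Qed.

Lemma case_plus (n phi B : R) : 2 <= n ->
  -(PI/(4*n)) <= phi <= 0 ->
  (B = PI/2 \/ B = 3*PI/2) ->
  (-(PI/4) < n*phi/2 < PI/4) /\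
  B < B + (PI + (3-n)*(n*phi))/(2*(n+1)) < B + PI/4.
Proof.
  intros Hn Hp HB. pose proof PI_RGT_0.
  assert (E : n * (PI/(4*n)) = PI/4) by (field; lra).
  set (u := n*phi).
  assert (Hu : -(PI/4) <= u <= 0) by (unfold u; nra).
  split; [lra|].
  assert (H1 : (n-2)*(-u) >= 0) by nra.
  assert (H2 : (n-2)*(PI/4+u) >= 0) by nra.
  destruct (frac_bounds (PI + (3-n)*u) (2*(n+1))) as [A _]; [lra|split; nra|].
  destruct A; nra.
Qed.

Lemma case_minus (n phi B : R) : 4 <= n ->
  0 <= phi <= PI/(4*n) ->
  (B = PI/2 \/ B = 3*PI/2) ->
  (-(PI/4) < n*phi/2 < PI/4) /\
  B - PI/4 < B + (-PI + (3-n)*(n*phi))/(2*(n+1)) < B.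
Proof.
  intros Hn Hp HB. pose proof PI_RGT_0.
  assert (E : n * (PI/(4*n)) = PI/4) by (field; lra).
  set (u := n*phi).
  assert (Hu : 0 <= u <= PI/4) by (unfold u; nra).
  split; [lra|].
  assert (H1 : (n-3)*u >= 0) by nra.
  assert (H2 : (n-3)*(PI/4-u) >= 0) by nra.
  destruct (frac_bounds (-PI + (3-n)*u) (2*(n+1))) as [_ A]; [lra|split; nra|].
  destruct A; nra.
Qed.

Theorem proposition7 (N : nat) (phi : R) :
  (2 <= N)%nat -> Nat.Even N ->
  Rmin 0 (phi_star N) <= phi <= Rmax 0 (phi_star N) ->
  in_F (INR N * phi / 2) (theta_of N phi - (INR N - 2) / 2 * phi).
Proof.
  intros HN [k Hk] Hphi.
  pose proof (Nat.div_mod N 8 ltac:(lia)). pose proof (Nat.mod_upper_bound N 8 ltac:(lia)).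
  assert (Hm : (N mod 8 = 0 \/ N mod 8 = 2 \/ N mod 8 = 4 \/ N mod 8 = 6)%nat).
  { lia. }
  pose proof PI_RGT_0 as HPI.
  unfold phi_star, theta_of, theta_star, t_N in *.
  assert (Hn2 : 2 <= INR N) by (replace 2 with (INR 2) by (simpl; lra); apply le_INR; lia).
  set (n := INR N) in *.
  assert (Hpos : 0 < PI/(4*n)) by (apply Rdiv_lt_0_compat; lra).
  unfold in_F, in_G. left.
  destruct Hm as [Hm|[Hm|[Hm|Hm]]]; rewrite Hm in *.
  -
    assert (Hn : 8 <= n) by (unfold n; replace 8 with (INR 8) by (simpl; lra); apply le_INR; lia).
    assert (Es : 2 * (2 * PI * (3 * n / 4 + 1) / (n + 1)) = (PI/(n+1) + PI) + 2 * INR 1 * PI)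
      by (simpl; field; lra).
    rewrite Es, sin_period, neg_sin in Hphi.
    pose proof (sin_small n ltac:(lra)).
    rewrite sgn_neg in Hphi by lra.
    rewrite Rmin_right in Hphi by lra. rewrite Rmax_left in Hphi by lra.
    destruct (case_plus n phi (3*PI/2) ltac:(lra) ltac:(lra) ltac:(right; reflexivity)) as [A B].
    replace ((n - 1) / (n + 1) * phi + 2 * PI * (3 * n / 4 + 1) / (n + 1) - (n - 2) / 2 * phi)
      with (3*PI/2 + (PI + (3 - n) * (n * phi)) / (2 * (n + 1))) by (field; lra).
    split; [lra|]. right; right; right. lra.
  -
    assert (Es : 2 * (2 * PI * (n / 4 + 1/2) / (n + 1)) = PI/(n+1) + PI) by (field; lra).
    rewrite Es, neg_sin in Hphi.
    pose proof (sin_small n ltac:(lra)).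
    rewrite sgn_neg in Hphi by lra.
    rewrite Rmin_right in Hphi by lra. rewrite Rmax_left in Hphi by lra.
    destruct (case_plus n phi (PI/2) ltac:(lra) ltac:(lra) ltac:(left; reflexivity)) as [A B].
    replace ((n - 1) / (n + 1) * phi + 2 * PI * (n / 4 + 1/2) / (n + 1) - (n - 2) / 2 * phi)
      with (PI/2 + (PI + (3 - n) * (n * phi)) / (2 * (n + 1))) by (field; lra).
    split; [lra|]. right; left. lra.
  -
    assert (Hn : 4 <= n) by (unfold n; replace 4 with (INR 4) by (simpl; lra); apply le_INR; lia).
    assert (Es : 2 * (2 * PI * (n / 4) / (n + 1)) = PI - PI/(n+1)) by (field; lra).
    rewrite Es, sin_PI_x in Hphi.
    pose proof (sin_small n ltac:(lra)).
    rewrite sgn_pos in Hphi by lra.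
    rewrite Rmin_left in Hphi by lra. rewrite Rmax_right in Hphi by lra.
    destruct (case_minus n phi (PI/2) ltac:(lra) ltac:(lra) ltac:(left; reflexivity)) as [A B].
    replace ((n - 1) / (n + 1) * phi + 2 * PI * (n / 4) / (n + 1) - (n - 2) / 2 * phi)
      with (PI/2 + (-PI + (3 - n) * (n * phi)) / (2 * (n + 1))) by (field; lra).
    split; [lra|]. left. lra.
  -
    assert (Hn : 6 <= n) by (unfold n; replace 6 with (INR 6) by (simpl; lra); apply le_INR; lia).
    assert (Es : 2 * (2 * PI * (3 * n / 4 + 1/2) / (n + 1)) = (PI - PI/(n+1)) + 2 * INR 1 * PI)
      by (simpl; field; lra).
    rewrite Es, sin_period, sin_PI_x in Hphi.
    pose proof (sin_small n ltac:(lra)).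
    rewrite sgn_pos in Hphi by lra.
    rewrite Rmin_left in Hphi by lra. rewrite Rmax_right in Hphi by lra.
    destruct (case_minus n phi (3*PI/2) ltac:(lra) ltac:(lra) ltac:(right; reflexivity)) as [A B].
    replace ((n - 1) / (n + 1) * phi + 2 * PI * (3 * n / 4 + 1/2) / (n + 1) - (n - 2) / 2 * phi)
      with (3*PI/2 + (-PI + (3 - n) * (n * phi)) / (2 * (n + 1))) by (field; lra).
    split; [lra|]. right; right; left. lra.
Qed.
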